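(* Let $\Gamma=(W,F,\succ_W,\succ_F)$ be a matching market and let $T=(V,E,W)$ be a technology tree in which every worker $w\in W$ is a specialist. If the firms have unit-demand preferences over $T$, then the firms' demand type $\mathcal{D}=\bigcup_{f\in F}\mathcal{D}_f$ is totally unimodular.
   Context: A matching market: finite firms $F$, finite workers $W$, each firm $f\in F$ has a strict, complete, transitive preference $\succ_f$ over $2^W$, and workers have preferences over firms (irrelevant here). The choice function $Ch_f(S)$ is the $\succ_f$-best subset of $S$. For $S\subseteq W$, $ind(S)\in\{0,1\}^W$ is its indicator vector. The demand type of $f$ is $\mathcal{D}_f=\{\mathbf d\in\{-1,0,1\}^W:\mathbf d\neq \mathbf 0,\ \mathbf d=ind(Ch_f(S))-ind(Ch_f(S'))\text{ for some }S'\subsetneq S\subseteq W\}$; $\mathcal D=\bigcup_{f\in F}\mathcal D_f$. A set of vectors is totally unimodular if the matrix with these vectors as columns has every square submatrix of determinant $0$ or $\pm1$. A technology tree $T=(V,E,W)$ is a directed rooted tree $(V,E)$ with root $v_0$, all edges pointing away from the root, together with a set $W^v\subseteq W$ for each vertex $v$, such that $W^{v_0}=\emptyset$ and for each edge $e$ from $v$ to $v'$, $W^v\subsetneq W^{v'}$; put $W^e=W^{v'}\setminus W^v$. A worker $w$ is a specialist in $T$ if $|\{e\in E: w\in W^e\}|=1$. Firms have unit-demand preferences over $T$ if for every $f\in F$ and $S\subseteq W$, $S\succ_f\emptyset$ implies $S=W^v$ for some $v\in V$. *)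

(* Defs.v *)
From HB Require Import structures.
From mathcomp Require Import all_boot all_order all_algebra.
Set Implicit Arguments. Unset Strict Implicit. Unset Printing Implicit Defensive.
Import Order.TTheory GRing.Theory Num.Theory.
Local Open Scope ring_scope.

Definition strict_total_order (T : finType) (r : rel T) : Prop :=
  [/\ (forall x, ~~ r x x),
      (forall x y z, r x y -> r y z -> r x z) &
      (forall x y, x != y -> r x y || r y x)].

(* Ch_f(S): the pref-best subset of S (set0 as a dummy default, never used
   when pref is a strict total order). *)
Definition Ch (W : finType) (pref : rel {set W}) (S : {set W}) : {set W} :=
  odflt set0 [pick C : {set W} | (C \subset S) &&
     [forall C' : {set W}, ((C' \subset S) && (C' != C)) ==> pref C C']].

Definition ind (W : finType) (S : {set W}) : {ffun W -> int} :=
  [ffun w => ((w \in S) : nat)%:Z].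

Definition demand_type (W : finType) (pref : rel {set W}) (d : {ffun W -> int}) : Prop :=
  [/\ (forall w, d w \in [:: -1; 0; 1]), d != 0 &
      exists S S' : {set W}, S' \proper S /\
        d = [ffun w => ind (Ch pref S) w - ind (Ch pref S') w]].

Definition demand_type_all (W F : finType) (pref : F -> rel {set W})
  (d : {ffun W -> int}) : Prop := exists f : F, demand_type (pref f) d.

Definition totally_unimodular (W : finType) (D : {ffun W -> int} -> Prop) : Prop :=
  forall (k : nat) (r : 'I_k -> W) (c : 'I_k -> {ffun W -> int}),
    injective r -> injective c -> (forall j, D (c j)) ->
    \det (\matrix_(i < k, j < k) c j (r i)) \in [:: 0; 1; -1].

(* (V,E) is a directed rooted tree with root v0, edges pointing away from
   the root (an arborescence): no edge enters the root, every other vertex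
   has exactly one incoming edge, and every vertex is reachable from v0. *)
Definition rooted_tree (V : finType) (E : rel V) (v0 : V) : Prop :=
  [/\ (forall v, ~~ E v v0),
      (forall v, v != v0 -> #|[set u | E u v]| = 1%N) &
      (forall v, connect E v0 v)].

Definition technology_tree (V W : finType) (E : rel V) (v0 : V)
  (Wv : V -> {set W}) : Prop :=
  [/\ rooted_tree E v0, Wv v0 = set0 &
      (forall v v', E v v' -> Wv v \proper Wv v')].

Definition Wedge (V W : finType) (Wv : V -> {set W}) (e : V * V) : {set W} :=
  Wv e.2 :\: Wv e.1.

Definition specialist (V W : finType) (E : rel V) (Wv : V -> {set W}) (w : W) : Prop :=
  #|[set e : V * V | E e.1 e.2 && (w \in Wedge Wv e)]| = 1%N.

Definition unit_demand (V W F : finType) (pref : F -> rel {set W})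
  (Wv : V -> {set W}) : Prop :=
  forall (f : F) (S : {set W}), pref f S set0 -> exists v : V, S = Wv v.

(* Main.v *)
Require Import Defs.
From mathcomp Require Import all_boot all_order all_algebra.
From mathcomp Require Import ring zify.
Set Implicit Arguments. Unset Strict Implicit. Unset Printing Implicit Defensive.
Import Order.TTheory GRing.Theory Num.Theory.
Local Open Scope ring_scope.

Lemma tu3M (a b : int) : a \in [:: 0; 1; -1] -> b \in [:: 0; 1; -1] -> a * b \in [:: 0; 1; -1].
Proof. by rewrite !inE => /or3P[]/eqP-> /or3P[]/eqP->. Qed.

Lemma tu3sign (a : int) n : a \in [:: 0; 1; -1] -> (-1) ^+ n * a \in [:: 0; 1; -1].
Proof. move=> Ha; apply: tu3M => //; rewrite -signr_odd; case: (odd n) => //. Qed.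

Lemma disjE (T : finType) (A B : {set T}) :
  reflect (forall x, x \in A -> x \notin B) [disjoint A & B].
Proof.
rewrite -setI_eq0; apply: (iffP eqP) => [H x xA|H].
  apply/negP=> xB; have: x \in A :&: B by rewrite inE xA xB.
  by rewrite H inE.
apply/setP=> x; rewrite !inE; case xA: (x \in A) => //=.
by rewrite (negbTE (H x xA)).
Qed.

Definition Mx (V : finType) k (L : 'I_k -> {set V}) (u v : 'I_k -> V) : 'M[int]_k :=
  \matrix_(i < k, j < k) (((u j \in L i) : nat)%:Z - ((v j \in L i) : nat)%:Z).

Definition lam (V : finType) k (L : 'I_k -> {set V}) :=
  forall i j, [|| L i \subset L j, L j \subset L i | [disjoint L i & L j]].

Lemma det_rows_sum0 k (A : 'M[int]_k.+1) : (forall j, \sum_i A i j = 0) -> \det A = 0.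
Proof.
move=> H.
have H0 : const_mx 1 *m A = 0 :> 'rV_k.+1.
  apply/rowP => j; rewrite !mxE -[RHS](H j); apply: eq_bigr => i _.
  by rewrite mxE mul1r.
have := congr1 (mulmx^~ (\adj A)) H0.
rewrite -mulmxA mul_mx_adj mul0mx mul_mx_scalar => /rowP/(_ 0).
by rewrite !mxE mulr1.
Qed.

Lemma det_col1 k (A : 'M[int]_k.+1) j i0 : (forall i, i != i0 -> A i j = 0) ->
  \det A = A i0 j * cofactor A i0 j.
Proof.
move=> H; rewrite (expand_det_col A j) (bigD1 i0) //= big1 ?addr0 // => i /H ->.
by rewrite mul0r.
Qed.

Lemma minorMx (V : finType) k (L : 'I_k.+1 -> {set V}) u v i0 j0 :
  row' i0 (col' j0 (Mx L u v)) = Mx (fun i => L (lift i0 i)) (fun j => u (lift j0 j)) (fun j => v (lift j0 j)).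
Proof. by apply/matrixP => a b; rewrite !mxE. Qed.

Lemma sum_disj (V : finType) k (L : 'I_k -> {set V}) x :
  (forall i a, i != a -> [disjoint L i & L a]) ->
  \sum_i ((x \in L i) : nat)%:Z = ([exists i, x \in L i] : nat)%:Z.
Proof.
move=> D; case: existsP => [[i0 Hi0]|N].
  rewrite (bigD1 i0) //= Hi0 big1 ?addr0 // => i /D /disjE Hd.
  have /negbTE -> // : x \notin L i by apply/negP => /Hd; rewrite Hi0.
by rewrite big1 // => i _; case Hx: (x \in L i) => //; case: N; exists i.
Qed.

Lemma det_subrow k (A B : 'M[int]_k) a i : i != a ->
  row a B = row a A - row i A -> row' a B = row' a A -> \det B = \det A.
Proof.
move=> ia Hr Hr'.
pose C := \matrix_(r, c) (if r == a then A i c else A r c).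
have C0 : \det C = 0.
  apply: (determinant_alternate ia) => c; rewrite !mxE eqxx (negbTE ia) //.
have RC : row a C = row i A by apply/rowP => c; rewrite !mxE eqxx.
have RC' : row' a C = row' a A.
  by apply/matrixP => r c; rewrite !mxE eq_sym (negbTE (neq_lift _ _)).
rewrite (determinant_multilinear (B := A) (C := C) (i0 := a) (b := 1) (c := -1)) //.
- by rewrite C0 mulr0 addr0 mul1r.
- by rewrite RC scale1r scaleN1r.
- by rewrite RC' Hr'.
Qed.

Lemma Mx_entry (V : finType) k (L : 'I_k -> {set V}) u v i j :
  Mx L u v i j \in [:: 0; 1; -1].
Proof. by rewrite mxE; case: (u j \in L i); case: (v j \in L i). Qed.

Lemma laminar_TU (V : finType) k (L : 'I_k -> {set V}) u v :
  lam L -> \det (Mx L u v) \in [:: 0; 1; -1].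
Proof.
elim: k L u v => [|k IHk] L0 u v lam0; first by rewrite det_mx00 !inE.
suff H : forall n (L : 'I_k.+1 -> {set V}), (\sum_i #|L i| < n)%N -> lam L ->
   \det (Mx L u v) \in [:: 0; 1; -1] by exact: (H _ L0 (ltnSn _) lam0).
elim=> [|n IHn] L Hn lamL; first by rewrite ltn0 in Hn.
case: (boolP [exists i, exists a, (i != a) && ~~ [disjoint L i & L a]]).
  case/existsP=> i1 /existsP[a1 /andP[ia1 nd1]].
  have [i [a [ia sub nd]]] : exists i a, [/\ i != a, L i \subset L a & ~~ [disjoint L i & L a]].
    case/or3P: (lamL i1 a1) => [s|s|d]; last by rewrite d in nd1.
      by exists i1, a1.
    by exists a1, i1; rewrite eq_sym disjoint_sym.
  have Li0 : (0 < #|L i|)%N.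
    rewrite card_gt0; apply: contra nd => /eqP ->; by apply/disjE => x; rewrite inE.
  case: (boolP (L i == L a)) => [/eqP eqia | neqia].
    suff -> : \det (Mx L u v) = 0 by []. by apply: (determinant_alternate ia) => c; rewrite !mxE eqia.
  have pia : L i \proper L a by rewrite properEneq neqia.
  case: (@arg_maxnP _ i (fun b => L b \proper L a) (fun b => #|L b|) pia) => b pba maxb.
  have ba : b != a by apply: contraTneq pba => ->; rewrite properxx.
  have Lb0 : (0 < #|L b|)%N by apply: leq_trans Li0 (maxb _ pia).
  have sba : L b \subset L a by apply: proper_sub.
  pose L' := fun c => if c == a then L a :\: L b else L c.
  have h x : ((x \in L a :\: L b) : nat)%:Z = ((x \in L a) : nat)%:Z - ((x \in L b) : nat)%:Z.
    rewrite inE; case xb: (x \in L b); first by rewrite (subsetP sba _ xb).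
    by case: (x \in L a).
  have -> : \det (Mx L u v) = \det (Mx L' u v).
    symmetry; apply: (det_subrow ba).
      apply/rowP => c; rewrite !mxE /L' eqxx !h.
      ring.
    by apply/matrixP => r c; rewrite !mxE /L' eq_sym (negbTE (neq_lift _ _)).
  apply: IHn.
    have E1 : (\sum_i #|L' i| = #|L a :\: L b| + \sum_(i | i != a) #|L i|)%N.
      rewrite (bigD1 a) //= /L' eqxx; congr (_ + _)%N; apply: eq_bigr => c /negbTE ->.
      by [].
    have E2 : (\sum_i #|L i| = #|L a| + \sum_(i | i != a) #|L i|)%N by rewrite (bigD1 a).
    have E3 : #|L a :\: L b| = (#|L a| - #|L b|)%N by rewrite cardsD (setIidPr sba).
    have E4 : (#|L b| <= #|L a|)%N := subset_leq_card sba.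
    rewrite E1 E3; rewrite E2 in Hn.
    move: Hn E4 Lb0; set s := (\sum_(i | _) _)%N; set x := #|L a|; set y := #|L b|.
    lia.
  have key : forall d, d != a ->
      [|| L' a \subset L' d, L' d \subset L' a | [disjoint L' a & L' d]].
    move=> d da; rewrite /L' eqxx (negbTE da).
    case/or3P: (lamL d a) => [sda|sad|dda].
    - case: (boolP (L d == L a)) => [/eqP -> | nda]; first by rewrite subsetDl.
      have pda : L d \proper L a by rewrite properEneq nda.
      have cdb := maxb d pda.
      case/or3P: (lamL d b) => [sdb|sbd|ddb].
      + apply/or3P; apply: Or33; apply/disjE => x; rewrite !inE => /andP[nxb xa].
        by apply/negP => /(subsetP sdb); rewrite (negbTE nxb).
      + have /eqP <- : L b == L d by rewrite eqEcard sbd; exact: cdb.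
        apply/or3P; apply: Or33; apply/disjE => x; rewrite !inE => /andP[] //.
      + apply/or3P; apply: Or32; apply/subsetP => x xd.
        by rewrite !inE (subsetP sda _ xd) andbT; apply: (disjE _ _ ddb).
    - apply/or3P; apply: Or31; exact: subset_trans (subsetDl _ _) sad.
    - apply/or3P; apply: Or33; apply/disjE => x; rewrite !inE => /andP[_ xa].
      by apply/negP => xd; move: (disjE _ _ dda x xd); rewrite xa.
  move=> c d; case: (boolP (c == a)) => [/eqP->|ca]; case: (boolP (d == a)) => [/eqP->|da].
  - by rewrite subxx.
  - exact: key.
  - case/or3P: (key c ca) => HH; apply/or3P;
      [apply: Or32|apply: Or31|apply: Or33; rewrite disjoint_sym] => //.
  - rewrite /L' (negbTE ca) (negbTE da); exact: lamL.
rewrite negb_exists => /forallP HH.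
have D : forall i a, i != a -> [disjoint L i & L a].
  move=> i a ia; move: (HH i); rewrite negb_exists => /forallP/(_ a).
  by rewrite ia /= negbK.
case: (boolP [exists j, [exists i, u j \in L i] != [exists i, v j \in L i]]).
  case/existsP => j Hj.
  have [i0 Hi0] : exists i0, forall i, i != i0 -> Mx L u v i j = 0.
    case Au: [exists i, u j \in L i] in Hj; case Bv: [exists i, v j \in L i] in Hj => //.
      case/existsP: Au => i0 Hi0; exists i0 => i ii0; rewrite mxE.
      have /negbTE -> : u j \notin L i.
        by apply/negP => Hu; move: (disjE _ _ (D _ _ ii0) _ Hu); rewrite Hi0.
      by case: (v j \in L i) / idP => // Hv; move/negbT: Bv; rewrite negb_exists => /forallP/(_ i); rewrite Hv.
    case/existsP: Bv => i0 Hi0; exists i0 => i ii0; rewrite mxE.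
    have /negbTE -> : v j \notin L i.
      by apply/negP => Hu; move: (disjE _ _ (D _ _ ii0) _ Hu); rewrite Hi0.
    by case: (u j \in L i) / idP => // Hv; move/negbT: Au; rewrite negb_exists => /forallP/(_ i); rewrite Hv.
  rewrite (det_col1 Hi0) /cofactor minorMx.
  apply: tu3M; first exact: Mx_entry.
  apply: tu3sign; apply: IHk => x y; exact: lamL.
rewrite negb_exists => /forallP Hc.
suff -> : \det (Mx L u v) = 0 by [].
apply: det_rows_sum0 => j.
under eq_bigr do rewrite mxE.
rewrite sumrB !sum_disj //.
by move: (Hc j); rewrite negbK => /eqP ->; rewrite subrr.
Qed.

Definition par (V : finType) (E : rel V) (x : V) := odflt x [pick u | E u x].

Lemma par_edge (V : finType) (E : rel V) v0 (x : V) :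
  rooted_tree E v0 -> x != v0 -> E (par E x) x.
Proof.
case=> _ H1 _ xv; rewrite /par; case: pickP => [u //|N].
move: (H1 x xv).
have -> : [set u | E u x] = set0 by apply/setP => u; rewrite !inE N.
by rewrite cards0.
Qed.

Lemma par_root (V : finType) (E : rel V) v0 : rooted_tree E v0 -> par E v0 = v0.
Proof. case=> H0 _ _; rewrite /par; case: pickP => [u|//]; by rewrite (negbTE (H0 u)). Qed.

Lemma anc (V W : finType) (E : rel V) v0 (Wv : V -> {set W}) :
  technology_tree E v0 Wv -> (forall w, specialist E Wv w) ->
  forall w, exists q, forall x, w \in Wv x <-> exists n, iter n (par E) x = q.
Proof.
case=> Hrt Hv0 Hsub Hspec w.
move/eqP: (Hspec w) => /cards1P [e He].
have : e \in [set e0 : V * V | E e0.1 e0.2 && (w \in Wedge Wv e0)] by rewrite He set11.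
rewrite inE => /andP[Ee we].
have uniq : forall e', E e'.1 e'.2 -> w \in Wedge Wv e' -> e' = e.
  move=> e' E' w'; apply/set1P; rewrite -He inE E' w' //.
exists e.2 => x; split.
  have : forall m x, (#|Wv x| < m)%N -> w \in Wv x -> exists n, iter n (par E) x = e.2.
    elim=> [//|m IH] y Hy wy.
    case: (boolP (y == v0)) => [/eqP yv|yv]; first by move: wy; rewrite yv Hv0 inE.
    have Ep := par_edge Hrt yv.
    case: (boolP (w \in Wv (par E y))) => wp.
      have [n Hn] := IH (par E y) (leq_trans (proper_card (Hsub _ _ Ep)) Hy) wp.
      by exists n.+1; rewrite iterSr.
    have := uniq (par E y, y) Ep; rewrite /Wedge /= inE wp wy => /(_ isT) He'.
    by exists 0%N; rewrite -He'.
  by move=> H; apply: (H _ x (ltnSn _)).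
case=> n; elim: n x => [|n IH] x.
  by move=> /= ->; move: we; rewrite /Wedge inE => /andP[].
rewrite iterSr => /IH.
case: (boolP (x == v0)) => [/eqP ->|xv]; first by rewrite par_root.
by move=> wp; have /proper_sub/subsetP := Hsub _ _ (par_edge Hrt xv); apply.
Qed.

Theorem theorem2 (W F V : finType) (pref : F -> rel {set W})
  (E : rel V) (v0 : V) (Wv : V -> {set W}) :
  (forall f : F, strict_total_order (pref f)) ->
  technology_tree E v0 Wv ->
  (forall w : W, specialist E Wv w) ->
  unit_demand pref Wv ->
  totally_unimodular (demand_type_all pref).
Proof.
move=> Hord Htree Hspec Hunit k r c rinj cinj Hc.
have [Hrt Hv0 Hsub] := Htree.
have Hch : forall f S, exists x, Ch (pref f) S = Wv x.
  move=> f S; rewrite /Ch; case: pickP => [C /andP[CS /forallP HC]|_] /=; last by exists v0.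
  case: (C =P set0) => [->|/eqP Cn]; first by exists v0.
  have := HC set0; rewrite sub0set /= eq_sym Cn /=; exact: Hunit.
have Hcol : forall j, exists p : V * V, c j == [ffun w => ind (Wv p.1) w - ind (Wv p.2) w].
  move=> j; case: (Hc j) => f [_ _ [S [S' [_ ->]]]].
  by case: (Hch f S) => x ->; case: (Hch f S') => y ->; exists (x, y).
pose uv j := odflt (v0, v0) [pick p | c j == [ffun w => ind (Wv p.1) w - ind (Wv p.2) w]].
have Huv j : c j = [ffun w => ind (Wv (uv j).1) w - ind (Wv (uv j).2) w].
  rewrite /uv; case: pickP => [p /eqP //|N]; case: (Hcol j) => p; by rewrite N.
pose L i := [set x | r i \in Wv x].
have -> : \matrix_(i < k, j < k) c j (r i) = Mx L (fun j => (uv j).1) (fun j => (uv j).2).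
  by apply/matrixP => i j; rewrite !mxE Huv /ind !ffunE !inE.
apply: laminar_TU.
move=> i j; have [qi Hi] := anc Htree Hspec (r i); have [qj Hj] := anc Htree Hspec (r j).
case D: [disjoint L i & L j]; first by rewrite !orbT.
move/negbT: D; rewrite -setI_eq0 => /set0Pn [x]; rewrite !inE => /andP[xi xj].
case/Hi: xi => n Hn; case/Hj: xj => m Hm.
case: (leqP n m) => nm.
  have Hq : iter (m - n) (par E) qi = qj by rewrite -Hn -iterD subnK.
  apply/or3P; apply: Or31; apply/subsetP => y; rewrite !inE => /Hi[p Hp]; apply/Hj.
  by exists (m - n + p)%N; rewrite iterD Hp.
have Hq : iter (n - m) (par E) qj = qi by rewrite -Hm -iterD subnK // ltnW.
apply/or3P; apply: Or32; apply/subsetP => y; rewrite !inE => /Hj[p Hp]; apply/Hi.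
by exists (n - m + p)%N; rewrite iterD Hp.
Qed.
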